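(* Let $(\mathcal G,\lambda)$ be a small morphism-colored groupoid satisfying the inverse-compatibility condition. If $g,f_1,f_2\in\mathrm{Mor}(\mathcal G)$, with $(f_1,f_2)$ composable, satisfy $(s_1\circ\lambda_1)(g)=(s_1\circ\lambda_1)(f_1\circ f_2)$, then there exist composable $g_1,g_2\in\mathrm{Mor}(\mathcal G)$ with $g=g_1\circ g_2$, $(s_1\circ\lambda_1)(g_1)=(s_1\circ\lambda_1)(f_1)$ and $(s_1\circ\lambda_1)(g_2)=(s_1\circ\lambda_1)(f_2)$. In other words, $(\mathcal G,s_1\circ\lambda_1)$ is a morphism-colored category.
   Context: A morphism-colored category is a pair $(\mathcal C,\lambda)$ where $\mathcal C$ is a category and $\lambda$ assigns to each morphism $f$ a color $\lambda(f)$, such that: whenever $g,f_1,f_2$ with $(f_1,f_2)$ composable satisfy $\lambda(g)=\lambda(f_1\circ f_2)$, there exist composable $g_1,g_2$ with $g=g_1\circ g_2$, $\lambda(g_1)=\lambda(f_1)$, $\lambda(g_2)=\lambda(f_2)$. It is a morphism-colored groupoid if $\mathcal C$ is a groupoid, and small if $\mathcal C$ is small and $\lambda$ is a map into a set. Inverse-compatibility: $\lambda(f)=\lambda(g)$ implies $\lambda(f^{-1})=\lambda(g^{-1})$. $I_1=\lambda(\mathrm{Mor}(\mathcal G))$, $\lambda_1:\mathrm{Mor}(\mathcal G)\to I_1$ the corestriction of $\lambda$. The equivalence relation $\overset{1}{\sim}$ on $I_1$: $\lambda(f_1\circ\cdots\circ f_l)\overset{1}{\sim}\lambda(g_1\circ\cdots\circ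 g_l)$ for every $l\ge1$ and all composable sequences $(f_1,\dots,f_l)$, $(g_1,\dots,g_l)$ with $\lambda(f_i)=\lambda(g_i)$ for all $i$ (no other pairs). $s_1:I_1\to\bar I_1$ is the quotient map onto the set $\bar I_1$ of equivalence classes. *)

(* Defs.v *)
From Stdlib Require Import List Relations.
Import ListNotations.

Record Groupoid := {
  Ob : Type;
  Mor : Type;
  dom : Mor -> Ob;
  cod : Mor -> Ob;
  comp : Mor -> Mor -> Mor;           (* comp f g = f o g, defined when dom f = cod g *)
  idm : Ob -> Mor;
  inv : Mor -> Mor;
  dom_comp : forall f g, dom f = cod g -> dom (comp f g) = dom g;
  cod_comp : forall f g, dom f = cod g -> cod (comp f g) = cod f;
  dom_idm : forall a, dom (idm a) = a;
  cod_idm : forall a, cod (idm a) = a;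
  comp_assoc : forall f g h, dom f = cod g -> dom g = cod h ->
      comp f (comp g h) = comp (comp f g) h;
  comp_idl : forall f, comp (idm (cod f)) f = f;
  comp_idr : forall f, comp f (idm (dom f)) = f;
  dom_inv : forall f, dom (inv f) = cod f;
  cod_inv : forall f, cod (inv f) = dom f;
  inv_l : forall f, comp (inv f) f = idm (dom f);
  inv_r : forall f, comp f (inv f) = idm (cod f)
}.

Arguments dom {_}. Arguments cod {_}. Arguments comp {_}.
Arguments idm {_}. Arguments inv {_}.

Definition morphism_colored (G : Groupoid) {I : Type} (lam : Mor G -> I) : Prop :=
  forall g f1 f2 : Mor G, dom f1 = cod f2 -> lam g = lam (comp f1 f2) ->
    exists g1 g2 : Mor G, dom g1 = cod g2 /\ g = comp g1 g2 /\
      lam g1 = lam f1 /\ lam g2 = lam f2.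

Definition inverse_compatible (G : Groupoid) {I : Type} (lam : Mor G -> I) : Prop :=
  forall f g : Mor G, lam f = lam g -> lam (inv f) = lam (inv g).

Fixpoint chain_ok {G : Groupoid} (f : Mor G) (fs : list (Mor G)) : Prop :=
  match fs with
  | [] => True
  | g :: gs => dom f = cod g /\ chain_ok g gs
  end.

Fixpoint comp_chain {G : Groupoid} (f : Mor G) (fs : list (Mor G)) : Mor G :=
  match fs with
  | [] => f
  | g :: gs => comp f (comp_chain g gs)
  end.

Definition rel1 (G : Groupoid) {I : Type} (lam : Mor G -> I) (c d : I) : Prop :=
  exists (f : Mor G) (fs : list (Mor G)) (g : Mor G) (gs : list (Mor G)),
    chain_ok f fs /\ chain_ok g gs /\
    lam f = lam g /\ Forall2 (fun a b => lam a = lam b) fs gs /\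
    c = lam (comp_chain f fs) /\ d = lam (comp_chain g gs).

(* The equivalence relation ~1.  The paper asserts that the pairs above are
   already all pairs of an equivalence relation; to make the quotient map s_1
   well defined regardless, we take the equivalence closure of rel1 (which is
   rel1 itself whenever rel1 is an equivalence). *)
Definition sim1 (G : Groupoid) {I : Type} (lam : Mor G -> I) : I -> I -> Prop :=
  clos_refl_sym_trans I (rel1 G lam).

(* s_1 : I_1 -> bar I_1, sending a color to its ~1-equivalence class
   (represented as the subset of I it determines). *)
Definition s1 (G : Groupoid) {I : Type} (lam : Mor G -> I) (c : I) : I -> Prop :=
  fun d => sim1 G lam c d.

Definition s1lam (G : Groupoid) {I : Type} (lam : Mor G -> I) (f : Mor G) : I -> Prop :=
  s1 G lam (lam f).

(* Main.v *)
Require Import Defs.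
From Stdlib Require Import List Relations FunctionalExtensionality PropExtensionality.
Import ListNotations.

Fixpoint mylast {G : Groupoid} (f : Mor G) (fs : list (Mor G)) : Mor G :=
  match fs with [] => f | g :: gs => mylast g gs end.

Lemma cod_chain (G : Groupoid) (fs : list (Mor G)) : forall f,
  chain_ok f fs -> cod (comp_chain f fs) = cod f.
Proof.
  induction fs as [|h hs IH]; intros f Hc; simpl; [reflexivity|].
  destruct Hc as [H1 H2]. apply (cod_comp G). rewrite IH; auto.
Qed.

Lemma dom_chain (G : Groupoid) (fs : list (Mor G)) : forall f,
  chain_ok f fs -> dom (comp_chain f fs) = dom (mylast f fs).
Proof.
  induction fs as [|h hs IH]; intros f Hc; simpl; [reflexivity|].
  destruct Hc as [H1 H2]. rewrite (dom_comp G). apply IH; auto.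
  rewrite cod_chain; auto.
Qed.

Lemma chain_app (G : Groupoid) (fs : list (Mor G)) : forall f f2 fs2,
  chain_ok f fs -> chain_ok f2 fs2 -> dom (mylast f fs) = cod f2 ->
  chain_ok f (fs ++ f2 :: fs2).
Proof.
  induction fs as [|h hs IH]; intros f f2 fs2 H1 H2 H3; simpl in *; [tauto|].
  destruct H1; split; auto.
Qed.

Lemma comp_app (G : Groupoid) (fs : list (Mor G)) : forall f f2 fs2,
  chain_ok f fs -> chain_ok f2 fs2 -> dom (mylast f fs) = cod f2 ->
  comp_chain f (fs ++ f2 :: fs2) = comp (comp_chain f fs) (comp_chain f2 fs2).
Proof.
  induction fs as [|h hs IH]; intros f f2 fs2 H1 H2 H3; simpl in *; [reflexivity|].
  destruct H1 as [Ha Hb]. rewrite IH; auto. apply (comp_assoc G).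
  - rewrite cod_chain; auto.
  - rewrite dom_chain, cod_chain; auto.
Qed.

Definition sc {G : Groupoid} {I : Type} (lam : Mor G -> I) (a b : Mor G) := lam a = lam b.

Lemma last_col (G : Groupoid) (I : Type) (lam : Mor G -> I) fs hs :
  Forall2 (sc lam) fs hs -> forall f h, lam f = lam h -> lam (mylast f fs) = lam (mylast h hs).
Proof.
  induction 1; intros; simpl; auto.
Qed.

Definition E (G : Groupoid) {I : Type} (lam : Mor G -> I) (a b : Mor G) : Prop :=
  exists (f : Mor G) (fs : list (Mor G)) (h : Mor G) (hs : list (Mor G)),
    chain_ok f fs /\ chain_ok h hs /\
    lam f = lam h /\ Forall2 (sc lam) fs hs /\
    a = comp_chain f fs /\ b = comp_chain h hs.

Lemma decompose (G : Groupoid) (I : Type) (lam : Mor G -> I)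
  (Hmc : morphism_colored G lam) (fs : list (Mor G)) : forall f g,
  chain_ok f fs -> lam g = lam (comp_chain f fs) ->
  exists g0 gs, chain_ok g0 gs /\ lam g0 = lam f /\ Forall2 (sc lam) fs gs /\
     g = comp_chain g0 gs.
Proof.
  induction fs as [|h hs IH]; intros f g Hc Hl; simpl in *.
  - exists g, []. repeat split; auto.
  - destruct Hc as [Ha Hb].
    destruct (Hmc g f (comp_chain h hs)) as [u [v [Huv [Hg [Hu Hv]]]]]; auto.
    rewrite cod_chain; auto.
    destruct (IH h v Hb Hv) as [v0 [vs [C1 [C2 [C3 C4]]]]].
    exists u, (v0 :: vs). subst. repeat split; auto.
    all: try (rewrite Huv, cod_chain; auto).
    constructor; auto. unfold sc; auto.
Qed.

Lemma E_sym G I (lam : Mor G -> I) a b : E G lam a b -> E G lam b a.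
Proof.
  intros [f [fs [h [hs [H1 [H2 [H3 [H4 [H5 H6]]]]]]]]].
  exists h, hs, f, fs. repeat split; auto.
  clear -H4. induction H4; constructor; unfold sc in *; auto.
Qed.

Lemma E_inv1 G I (lam : Mor G -> I) (Hmc : morphism_colored G lam) a b a' :
  E G lam a b -> lam a' = lam a -> E G lam a' b.
Proof.
  intros [f [fs [h [hs [H1 [H2 [H3 [H4 [H5 H6]]]]]]]]] Hl. subst.
  destruct (decompose G I lam Hmc fs f a' H1 Hl) as [g0 [gs [C1 [C2 [C3 C4]]]]].
  exists g0, gs, h, hs. repeat split; auto. congruence.
  clear -C3 H4. revert hs H4. induction C3; intros hs H4; inversion H4; subst;
    constructor; auto. unfold sc in *; congruence.
Qed.

Lemma E_app G I (lam : Mor G -> I) a b a2 b2 :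
  E G lam a b -> E G lam a2 b2 -> dom a = cod a2 -> dom b = cod b2 ->
  E G lam (comp a a2) (comp b b2).
Proof.
  intros [f [fs [h [hs [H1 [H2 [H3 [H4 [H5 H6]]]]]]]]]
         [f' [fs' [h' [hs' [H1' [H2' [H3' [H4' [H5' H6']]]]]]]]] Da Db. subst.
  rewrite dom_chain, cod_chain in Da, Db; auto.
  exists f, (fs ++ f' :: fs'), h, (hs ++ h' :: hs'). repeat split; auto.
  - apply chain_app; auto.
  - apply chain_app; auto.
  - apply Forall2_app; auto.
  - rewrite comp_app; auto.
  - rewrite comp_app; auto.
Qed.

Lemma E_last G I (lam : Mor G -> I) a b : E G lam a b ->
  exists la lb, lam la = lam lb /\ dom la = dom a /\ dom lb = dom b.
Proof.
  intros [f [fs [h [hs [H1 [H2 [H3 [H4 [H5 H6]]]]]]]]]. subst.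
  exists (mylast f fs), (mylast h hs). repeat split.
  - apply last_col; auto.
  - rewrite dom_chain; auto.
  - rewrite dom_chain; auto.
Qed.

Lemma E_rel1 G I (lam : Mor G -> I) a b : E G lam a b -> rel1 G lam (lam a) (lam b).
Proof.
  intros [f [fs [h [hs [H1 [H2 [H3 [H4 [H5 H6]]]]]]]]].
  exists f, fs, h, hs. subst. repeat split; auto.
Qed.

Lemma E_base G I (lam : Mor G -> I) a b : lam a = lam b -> E G lam a b.
Proof. intros; exists a, [], b, []; repeat split; auto. Qed.

Definition Q G {I} (lam : Mor G -> I) (c d : I) : Prop :=
  forall g f1 f2, dom f1 = cod f2 -> lam g = c -> lam (comp f1 f2) = d ->
  exists g1 g2, dom g1 = cod g2 /\ g = comp g1 g2 /\
     sim1 G lam (lam g1) (lam f1) /\ sim1 G lam (lam g2) (lam f2).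

Lemma Q_step G I (lam : Mor G -> I) (Hmc : morphism_colored G lam)
  (Hinv : inverse_compatible G lam) p q :
  E G lam p q -> Q G lam (lam p) (lam q).
Proof.
  intros HE g f1 f2 Hd Hg Hf.
  assert (HE' : E G lam g (comp f1 f2)).
  { apply E_inv1 with p; auto. apply E_sym. apply E_inv1 with q; auto.
    apply E_sym; auto. }
  destruct (E_last _ _ _ _ _ HE') as [la [lb [L1 [L2 L3]]]].
  rewrite (dom_comp G) in L3 by auto.
  assert (Hlb : lb = comp (comp lb (inv f2)) f2).
  { rewrite <- (comp_assoc G).
    - rewrite (inv_l G), <- L3, (comp_idr G). reflexivity.
    - rewrite (cod_inv G); auto.
    - rewrite (dom_inv G); auto. }
  destruct (Hmc la (comp lb (inv f2)) f2) as [u [x [Hux [Hla [Hu Hx]]]]].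
  { rewrite (dom_comp G); rewrite ?(dom_inv G), ?(cod_inv G); auto. }
  { rewrite <- Hlb; auto. }
  assert (Dx : dom x = dom g).
  { rewrite <- L2, Hla, (dom_comp G); auto. }
  exists (comp g (inv x)), x. repeat split.
  - rewrite (dom_comp G); rewrite ?(cod_inv G); auto. rewrite (dom_inv G); auto.
  - rewrite <- (comp_assoc G).
    + rewrite (inv_l G), Dx, (comp_idr G). reflexivity.
    + rewrite (cod_inv G); auto.
    + rewrite (dom_inv G); auto.
  - apply rst_step.
    assert (Hf1 : f1 = comp (comp f1 f2) (inv f2)).
    { rewrite <- (comp_assoc G); auto.
      - rewrite (inv_r G), <- Hd, (comp_idr G); reflexivity.
      - rewrite (cod_inv G); auto. }
    rewrite Hf1 at 1. apply E_rel1. apply E_app; auto.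
    + apply E_base. apply Hinv. auto.
    + rewrite (cod_inv G); auto.
    + rewrite (dom_comp G), (cod_inv G); auto.
  - rewrite Hx. apply rst_refl.
Qed.

Lemma Q_all G I (lam : Mor G -> I) (Hmc : morphism_colored G lam)
  (Hinv : inverse_compatible G lam) c e :
  clos_refl_sym_trans_1n I (rel1 G lam) c e -> Q G lam c e.
Proof.
  induction 1 as [c|c d e Hs Hc IH].
  - intros g f1 f2 Hd Hg Hf.
    destruct (Hmc g f1 f2) as [g1 [g2 [A [B [C D]]]]]; auto. congruence.
    exists g1, g2. repeat split; auto.
    + rewrite C. apply rst_refl.
    + rewrite D. apply rst_refl.
  - assert (HS : exists p q, E G lam p q /\ c = lam p /\ d = lam q).
    { destruct Hs as [Hs|Hs];
        destruct Hs as [f [fs [h [hs [H1 [H2 [H3 [H4 [H5 H6]]]]]]]]].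
      - exists (comp_chain f fs), (comp_chain h hs). split; auto.
        exists f, fs, h, hs; repeat split; auto.
      - exists (comp_chain h hs), (comp_chain f fs). split; auto.
        apply E_sym. exists f, fs, h, hs; repeat split; auto. }
    destruct HS as [p [q [HE [-> ->]]]].
    intros g f1 f2 Hd Hg Hf.
    assert (Hq : dom q = dom q) by reflexivity.
    destruct (IH q f1 f2 Hd eq_refl Hf) as [h1 [h2 [A [B [C D]]]]].
    destruct (Q_step G I lam Hmc Hinv p q HE g h1 h2 A Hg) as [g1 [g2 [A' [B' [C' D']]]]].
    { rewrite <- B; auto. }
    exists g1, g2. repeat split; auto.
    + eapply rst_trans; eauto.
    + eapply rst_trans; eauto.
Qed.

Lemma s1_eq G I (lam : Mor G -> I) a b : sim1 G lam a b -> s1 G lam a = s1 G lam b.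
Proof.
  intros H. apply functional_extensionality. intro d. unfold s1.
  apply propositional_extensionality. split; intro K.
  - eapply rst_trans; [apply rst_sym; eauto|eauto].
  - eapply rst_trans; eauto.
Qed.

Theorem mainTheorem6 (G : Groupoid) (I : Type) (lam : Mor G -> I)
  (Hmc : morphism_colored G lam) (Hinv : inverse_compatible G lam) :
  morphism_colored G (s1lam G lam).
Proof.
  intros g f1 f2 Hd Heq.
  assert (Hs : sim1 G lam (lam g) (lam (comp f1 f2))).
  { unfold s1lam, s1 in Heq.
    assert (K := f_equal (fun F => F (lam (comp f1 f2))) Heq). simpl in K.
    rewrite K. apply rst_refl. }
  apply clos_rst_rst1n_iff in Hs.
  destruct (Q_all G I lam Hmc Hinv _ _ Hs g f1 f2 Hd eq_refl eq_refl)
    as [g1 [g2 [A [B [C D]]]]].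
  exists g1, g2. repeat split; auto; unfold s1lam; apply s1_eq; auto.
Qed.
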